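(* Assume $r$ is not a codeword of the GRS code (equivalently $\deg R\ge k$). Let $B\in\mathbb F_q[X]^{(\ell+1)\times(\ell+1)}$ represent a basis $B^{(0)},\dots,B^{(\ell)}$ of $M_{s,\ell}$ such that $BW_\ell$ is in weak Popov form. Let $C^{\mathrm{II}}$ be the $(\ell+2)\times(\ell+2)$ matrix whose first row is $(G^{s+1},0,\dots,0)$ and whose $(i+1)$-th row ($i=0,\dots,\ell$) is the coefficient vector (of length $\ell+2$) of $B^{(i)}(X,Y)(Y-R(X))$. Then $\Delta(C^{\mathrm{II}}W_{\ell+1})=(\ell+1)(\deg R-k+1)\le(\ell+1)(n-k)$.
   Context: Let $\mathbb F_q$ be a finite field, $1\le k<n<q$, $\alpha_0,\dots,\alpha_{n-1}$ distinct nonzero elements of $\mathbb F_q$, $w_0,\dots,w_{n-1}$ nonzero elements of $\mathbb F_q$. The GRS code is $\{(w_0f(\alpha_0),\dots,w_{n-1}f(\alpha_{n-1})): f\in\mathbb F_q[X],\deg f<k\}$. Let $r\in\mathbb F_q^n$, $r_i'=r_i/w_i$, $G=\prod_i(X-\alpha_i)$, and $R$ the unique polynomial of degree $<n$ with $R(\alpha_i)=r_i'$. For positive integers $s\le\ell$, $M_{s,\ell}$ is the $\mathbb F_q[X]$-module of all $Q\in\mathbb F_q[X,Y]$ of $Y$-degree at most $\ell$ such that for each $i$, $Q(X+\alpha_i,Y+r_i')$ has no monomials of total degree less than $s$. A polynomial $\sum_tQ_t(X)Y^t$ has coefficient vector $(Q_0,Q_1,\dots)$; a matrix represents a basis if its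 rows are the coefficient vectors of the basis elements. $W_\ell=\mathrm{diag}(1,X^{k-1},\dots,X^{\ell(k-1)})$. For $v\in\mathbb F_q[X]^m$, $\deg v=\max_i\deg v_i$, $\mathrm{LP}(v)=\max\{i:\deg v_i=\deg v\}$; a matrix is in weak Popov form if its rows have pairwise different leading positions. For a square matrix $V$ with rows $v_i$, $\deg V=\sum_i\deg v_i$ and $\Delta(V)=\deg V-\deg\det V$. *)

(* Defs.v *)
From HB Require Import structures.
From mathcomp Require Import all_boot all_order all_algebra.
Set Implicit Arguments. Unset Strict Implicit. Unset Printing Implicit Defensive.
Import Order.TTheory GRing.Theory Num.Theory.
Local Open Scope ring_scope.

(* Bivariate polynomials are {poly {poly F}}: the OUTER variable is Y,
   the coefficients are univariate polynomials in X. *)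

Section GRSDefs.
Variable F : fieldType.

Definition polyXY_of_vec m (v : 'rV[{poly F}]_m) : {poly {poly F}} :=
  \sum_(t < m) (v ord0 t)%:P * 'X^t.

Definition shiftXY m (v : 'rV[{poly F}]_m) (a b : F) : {poly {poly F}} :=
  \sum_(t < m) ((v ord0 t) \Po ('X + a%:P))%:P * ('X + (b%:P)%:P) ^+ t.

Definition vanishes_to m (v : 'rV[{poly F}]_m) (a b : F) (s : nat) : Prop :=
  forall t j : nat, (t + j < s)%N -> ((shiftXY v a b)`_t)`_j = 0.

(* Membership in M_{s,l}: Y-degree <= l is built in (vector of length l+1). *)
Definition in_M n l s (alpha r' : 'I_n -> F) (v : 'rV[{poly F}]_l.+1) : Prop :=
  forall i : 'I_n, vanishes_to v (alpha i) (r' i) s.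

Definition is_basis_M n l s (alpha r' : 'I_n -> F) (B : 'M[{poly F}]_l.+1) : Prop :=
  [/\ forall i, in_M s alpha r' (row i B),
      forall v, in_M s alpha r' v -> exists c : 'rV[{poly F}]_l.+1, v = c *m B
    & forall c : 'rV[{poly F}]_l.+1, c *m B = 0 -> c = 0].

Definition vsize m (v : 'rV[{poly F}]_m) : nat := \max_(i < m) size (v ord0 i).
Definition vdeg m (v : 'rV[{poly F}]_m) : nat := (vsize v).-1.
Definition LP m (v : 'rV[{poly F}]_m) : nat :=
  \max_(i < m | size (v ord0 i) == vsize v) (i : nat).

Definition weak_popov m p (V : 'M[{poly F}]_(m, p)) : Prop :=
  forall i j : 'I_m, i != j -> LP (row i V) != LP (row j V).

Definition matdeg m (V : 'M[{poly F}]_m) : nat := \sum_(i < m) vdeg (row i V).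
Definition Delta m (V : 'M[{poly F}]_m) : int :=
  (matdeg V)%:Z - ((size (\det V)).-1)%:Z.

Definition Wmat (l k : nat) : 'M[{poly F}]_l.+1 :=
  diag_mx (\row_(i < l.+1) ('X ^+ (i * (k.-1)))).

Definition CII l s (G R : {poly F}) (B : 'M[{poly F}]_l.+1) : 'M[{poly F}]_l.+2 :=
  \matrix_(i < l.+2, j < l.+2)
    match unlift ord0 i with
    | None => if j == ord0 then G ^+ s.+1 else 0
    | Some i' => (polyXY_of_vec (row i' B) * ('X - R%:P))`_j
    end.

Definition is_codeword n k (alpha w r : 'I_n -> F) : Prop :=
  exists f : {poly F}, (size f <= k)%N /\ forall i, r i = w i * f.[alpha i].

End GRSDefs.

(* Main.v *)
Require Import Defs.
From HB Require Import structures.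
From mathcomp Require Import all_boot all_order all_algebra perm zify ring.
Import Order.TTheory GRing.Theory Num.Theory.
Local Open Scope ring_scope.

Section Aux.
Variable F : fieldType.

Lemma coefM_bound (p q : {poly F}) a b :
  (size p <= a.+1)%N -> (size q <= b.+1)%N -> (p * q)`_(a + b) = p`_a * q`_b.
Proof.
move=> hp hq; rewrite coefM (bigD1 (inord a)) /=; last by [].
rewrite inordK ?ltn_add2r ?leq_addr // addKn big1 ?addr0 // => j hj.
have : (j : nat) != a by apply: contra hj => /eqP e; apply/eqP/val_inj; rewrite /= inordK ?e // ltnS leq_addr.
rewrite neq_ltn => /orP[ja|aj].
- rewrite [q`__]nth_default ?mulr0 //; apply: leq_trans hq _.
  lia.
- by rewrite nth_default ?mul0r //; apply: leq_trans hp _.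
Qed.


Lemma prod_coef_bound I (r : seq I) (p : I -> {poly F}) (d : I -> nat) :
  (forall i, size (p i) <= (d i).+1)%N ->
  (size (\prod_(i <- r) p i)%R <= (\sum_(i <- r) d i).+1)%N /\
  (\prod_(i <- r) p i)`_(\sum_(i <- r) d i) = \prod_(i <- r) (p i)`_(d i).
Proof.
move=> h; elim: r => [|x r [IHs IHc]]; first by rewrite !big_nil size_poly1 coefC.
rewrite !big_cons; split; last by rewrite coefM_bound ?IHc.
apply: leq_trans (size_polyMleq _ _) _; have := h x; lia.
Qed.

Lemma det_coef_bound m (V : 'M[{poly F}]_m) (d : 'I_m -> nat) :
  (forall i j, size (V i j) <= (d i).+1)%N ->
  (size (\det V)%R <= (\sum_i d i).+1)%N /\
  (\det V)`_(\sum_i d i) = \det (\matrix_(i,j) (V i j)`_(d i)).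
Proof.
move=> h; split.
  apply: leq_trans (size_sum _ _ _) _; apply/bigmax_leqP_seq => s _ _.
  rewrite size_Msign; exact: (@prod_coef_bound _ (index_enum 'I_m) _ _ (fun i => h i (s i))).1.
rewrite coef_sum; apply: eq_bigr => s _.
rewrite -[(-1) ^+ _](rmorph_sign (@polyC F)) coefCM.
rewrite (@prod_coef_bound _ (index_enum 'I_m) _ _ (fun i => h i (s i))).2; congr (_ * _).
by apply: eq_bigr => i _; rewrite mxE.
Qed.


Lemma bigmax_attained m (P : pred 'I_m) :
  (exists j, P j) -> exists2 j : 'I_m, P j & (\max_(i < m | P i) (i : nat))%N = j.
Proof.
move=> [j0 Pj0]; rewrite (bigop.bigmax_eq_arg j0 Pj0).
by case: fintype.arg_maxnP => // j Pj _; exists j.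
Qed.

Lemma sum_le_eq m (f g : 'I_m -> nat) :
  (forall i, f i <= g i)%N -> (\sum_i f i = \sum_i g i)%N -> forall i, f i = g i.
Proof.
move=> le eq i; apply/eqP; rewrite eqn_leq le /=; apply: contraT; rewrite -ltnNge => lt.
have : (\sum_i f i < \sum_i g i)%N.
  rewrite (bigD1 i) //= [X in (_ < X)%N](bigD1 i) //= -addSn leq_add //.
  by apply: leq_sum => j _.
by rewrite eq ltnn.
Qed.

Lemma wpopov_det m (V : 'M[{poly F}]_m) :
  (forall i, 0 < vsize (row i V))%N -> weak_popov V -> size (\det V) = (matdeg V).+1.
Proof.
case: m V => [|m] V hpos hwp.
  by rewrite det_mx00 size_poly1 /matdeg big_ord0.
pose d i := vdeg (row i V).
have hsz i j : (size (V i j) <= (d i).+1)%N.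
  rewrite /d /vdeg prednK ?hpos //.
  by have := bigop.leq_bigmax (F := fun j => size ((row i V) ord0 j)) j; rewrite mxE.
have [hsize hcoef] := @det_coef_bound _ V d hsz.
pose L := \matrix_(i, j) (V i j)`_(d i).
have hLP i : exists2 j : 'I_m.+1, size (V i j) = vsize (row i V) & LP (row i V) = j.
  have [j0 hj0] := @bigop.eq_bigmax _ (fun j => size ((row i V) ord0 j)) (ltac:(by rewrite card_ord)).
  rewrite /LP; have [j Pj ->] : exists2 j : 'I_m.+1,
      (fun j => size ((row i V) ord0 j) == vsize (row i V)) j &
      (\max_(i0 < m.+1 | size ((row i V) ord0 i0) == vsize (row i V)) (i0 : nat))%N = j.
    by apply: bigmax_attained; exists j0; rewrite /= /vsize hj0.
  by exists j => //; move: Pj => /= /eqP; rewrite mxE.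
pose pi i : 'I_m.+1 := inord (LP (row i V)).
have hpi i : size (V i (pi i)) = vsize (row i V) /\ LP (row i V) = pi i.
  have [j h1 h2] := hLP i.
  by rewrite /pi h2 inordK ?ltn_ord //; have -> : (inord j : 'I_m.+1) = j by apply/val_inj; rewrite /= inordK.
have Lpi i : L i (pi i) != 0.
  rewrite mxE /d /vdeg -(hpi i).1 -lead_coefE lead_coef_eq0 -size_poly_gt0 (hpi i).1.
  exact: hpos.
have Lgt i (j : 'I_m.+1) : (pi i < j)%N -> L i j = 0.
  move=> hij; rewrite mxE nth_default //.
  have : size (V i j) != vsize (row i V).
    apply: contraTN hij => /eqP e; rewrite -leqNgt -(hpi i).2.
    by apply: (bigop.leq_bigmax_cond j); rewrite mxE e.
  move=> h2; have := hsz i j; rewrite /d /vdeg prednK ?hpos // => h1.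
  have := hpos i; case: (vsize (row i V)) h1 h2 => // v h1 h2 _ /=.
  by rewrite -ltnS ltn_neqAle h2 h1.
have pi_inj : injective pi.
  move=> i j e; apply/eqP; apply/negPn/negP => nij.
  by move: (hwp i j nij); rewrite (hpi i).2 (hpi j).2 e eqxx.
pose sp := perm pi_inj.
have detL : \det L != 0.
  rewrite /determinant (bigD1 sp) //= [X in _ + X]big1 ?addr0.
    rewrite mulf_neq0 ?signr_eq0 //; apply/prodf_neq0 => i _; rewrite permE; exact: Lpi.
  move=> s hs; rewrite [X in _ * X](_ : _ = 0) ?mulr0 //; apply/eqP/prodf_eq0.
  case: (boolP [forall i, (s i <= pi i)%N]) => [/forallP hle|].
    exfalso; move/eqP: hs; apply; apply/permP => i; rewrite permE; apply/val_inj.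
    have e1 : (\sum_(i < m.+1) nat_of_ord (s i) = \sum_(i < m.+1) nat_of_ord i)%N.
      symmetry; exact: (reindex_inj (@perm_inj _ s)).
    have e2 : (\sum_(i < m.+1) nat_of_ord (pi i) = \sum_(i < m.+1) nat_of_ord i)%N.
      symmetry; exact: (reindex_inj pi_inj).
    have esum : (\sum_(i < m.+1) nat_of_ord (s i) = \sum_(i < m.+1) nat_of_ord (pi i))%N.
      by rewrite e1 e2.
    exact: (@sum_le_eq _ (fun i => nat_of_ord (s i)) (fun i => nat_of_ord (pi i)) hle esum i).
  rewrite negb_forall => /existsP [i]; rewrite -ltnNge => hi.
  by exists i => //; rewrite Lgt.
apply/eqP; rewrite eqn_leq hsize /=; apply: contraR detL; rewrite -ltnNge ltnS => hle.
by rewrite -hcoef nth_default.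
Qed.


Lemma coef_pXY m (v : 'rV[{poly F}]_m) t :
  (polyXY_of_vec v)`_t = \sum_(a < m) v ord0 a * (t == a)%:R.
Proof. by rewrite /polyXY_of_vec coef_sum; apply: eq_bigr => a _; rewrite coefCM coefXn. Qed.

Lemma coef_pXY_ord m (v : 'rV[{poly F}]_m) (j : 'I_m) :
  (polyXY_of_vec v)`_j = v ord0 j.
Proof.
rewrite coef_pXY (bigD1 j) //= eqxx mulr1 big1 ?addr0 // => a ha.
have : (j : nat) != a by apply: contra ha => /eqP e; apply/eqP/val_inj.
by move/negPf ->; rewrite mulr0.
Qed.

Lemma coef_pXY_ge m (v : 'rV[{poly F}]_m) t : (m <= t)%N -> (polyXY_of_vec v)`_t = 0.
Proof.
move=> ht; rewrite coef_pXY big1 // => a _.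
have : t != a by rewrite neq_ltn (leq_trans (ltn_ord a) ht) orbT.
by move/negPf ->; rewrite mulr0.
Qed.

Lemma BW_entry l k (B : 'M[{poly F}]_l.+1) i (t : 'I_l.+1) :
  (B *m Wmat F l k) i t = (polyXY_of_vec (row i B))`_t * 'X^(t * k.-1).
Proof. by rewrite /Wmat mul_mx_diag !mxE coef_pXY_ord mxE. Qed.

Lemma CW_entry0 l s k G R (B : 'M[{poly F}]_l.+1) (j : 'I_l.+2) :
  (CII s G R B *m Wmat F l.+1 k) ord0 j = if (j : nat) == 0%N then G ^+ s.+1 else 0.
Proof.
rewrite /Wmat mul_mx_diag !mxE unlift_none.
by case: j => [[|j] hj] /=; rewrite ?mul0r // mul0n expr0 mulr1.
Qed.

Lemma CW_entry l s k G R (B : 'M[{poly F}]_l.+1) (i : 'I_l.+1) (j : 'I_l.+2) :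
  (CII s G R B *m Wmat F l.+1 k) (lift ord0 i) j =
  (if (j : nat) == 0%N then 0 else
     (polyXY_of_vec (row i B))`_(j.-1) * 'X^(j.-1 * k.-1) * 'X^(k.-1))
  - (polyXY_of_vec (row i B))`_j * 'X^(j * k.-1) * R.
Proof.
rewrite /Wmat mul_mx_diag !mxE liftK /= mulrBr coefB coefMX coefMC.
case: j => [[|j] hj] /=; first by rewrite mul0n expr0 !mulr1 sub0r.
by rewrite mulSn addnC exprD; ring.
Qed.


Lemma det_CII l s G R (B : 'M[{poly F}]_l.+1) :
  \det (CII s G R B) = G ^+ s.+1 * \det B.
Proof.
rewrite (expand_det_row _ ord0) big_ord_recl big1 ?addr0; last first.
  by move=> i _; rewrite /CII mxE unlift_none /= mul0r.
rewrite /cofactor /CII mxE unlift_none eqxx addn0 expr0 mul1r.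
pose U : 'M[{poly F}]_l.+1 :=
  \matrix_(a, b) (((b : nat) == a)%:R - ((b.+1) == a)%:R * R).
have -> : row' ord0 (col' ord0 (\matrix_(i, j) match unlift ord0 i with
    | Some i' => (polyXY_of_vec (row i' B) * ('X - R%:P))`_j
    | None => if j == ord0 then G ^+ s.+1 else 0 end)) = B *m U.
  apply/matrixP => i j; rewrite !mxE liftK lift0 mulrBr coefB coefMX coefMC /=.
  rewrite !coef_pXY mulr_suml -sumrB; apply: eq_bigr => a _; rewrite !mxE; ring.
rewrite det_mulmx (@det_trig _ _ U).
  rewrite big1 ?mulr1 // => i _; rewrite mxE eqxx.
  by rewrite (gtn_eqF (ltnSn i)) mul0r subr0.
apply/is_trig_mxP => i j hij; rewrite mxE.
have -> : ((j : nat) == i) = false by rewrite eq_sym (ltn_eqF hij).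
have -> : ((j.+1) == i) = false by rewrite (gtn_eqF (leqW hij)).
by rewrite mul0r subr0.
Qed.


Lemma det_W l k : \det (Wmat F l.+1 k) = \det (Wmat F l k) * 'X^(l.+1 * k.-1).
Proof.
rewrite /Wmat !det_diag big_ord_recr /= !mxE; congr (_ * _).
by apply: eq_bigr => i _; rewrite !mxE.
Qed.

Lemma vsize_CW0 l s k G R (B : 'M[{poly F}]_l.+1) :
  vsize (row ord0 (CII s G R B *m Wmat F l.+1 k)) = size (G ^+ s.+1).
Proof.
rewrite /vsize big_ord_recl big1 ?maxn0 => [|j _]; rewrite mxE CW_entry0 //=.
by rewrite size_poly0.
Qed.

Lemma vsize_CW l s k (G R : {poly F}) (B : 'M[{poly F}]_l.+1) (i : 'I_l.+1) :
  (0 < k)%N -> (k < size R)%N -> (0 < vsize (row i (B *m Wmat F l k)))%N ->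
  vsize (row (lift ord0 i) (CII s G R B *m Wmat F l.+1 k)) =
  (vsize (row i (B *m Wmat F l k)) + size R).-1.
Proof.
move=> hk hRk he0.
set e := vsize (row i (B *m Wmat F l k)).
have he : (0 < e)%N := he0.
set P := polyXY_of_vec (row i B).
pose q t := P`_t * 'X^(t * k.-1).
have hq t : (size (q t) <= e)%N.
  case: (ltnP t l.+1) => ht.
    have := bigop.leq_bigmax (F := fun j => size ((row i (B *m Wmat F l k)) ord0 j)) (Ordinal ht).
    by rewrite mxE BW_entry.
  by rewrite /q coef_pXY_ge // mul0r size_poly0.
have [t0 ht0] : exists t0 : 'I_l.+1, size (q t0) = e.
  have [t0 h0] := @bigop.eq_bigmax _ (fun j => size ((row i (B *m Wmat F l k)) ord0 j)) (ltac:(by rewrite card_ord)).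
  by exists t0; rewrite /e /vsize h0 mxE BW_entry.
have hR : R != 0 by rewrite -size_poly_gt0 (leq_ltn_trans _ hRk).
have ha j : (size (if (j : nat) == 0%N then 0 else q j.-1 * 'X^(k.-1))%R < (e + size R).-1)%N.
  case: eqP => _; first by rewrite size_poly0 -!subn1; lia.
  apply: leq_ltn_trans (size_polyMleq _ _) _; rewrite size_polyXn.
  have := hq j.-1; move: (size (q j.-1)) => x; rewrite -!subn1 => hx; move: hx hk hRk; move: (size R) => y; clear; lia.
have hb j : (size (q j * R)%R <= (e + size R).-1)%N.
  apply: leq_trans (size_polyMleq _ _) _; have := hq j; move: (size (q j)) => x; rewrite -!subn1; lia.
have hentry (j : 'I_l.+2) : (CII s G R B *m Wmat F l.+1 k) (lift ord0 i) j =
    (if (j : nat) == 0%N then 0 else q j.-1 * 'X^(k.-1)) - q j * R.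
  by rewrite CW_entry.
apply/eqP; rewrite eqn_leq; apply/andP; split.
  apply/bigmax_leqP => j _; rewrite mxE hentry.
  apply: leq_trans (size_polyD _ _) _; rewrite size_polyN geq_max hb andbT.
  exact: ltnW.
pose j0 : 'I_l.+2 := widen_ord (leqnSn _) t0.
apply: leq_trans (bigop.leq_bigmax (F := fun j => size ((row (lift ord0 i) (CII s G R B *m Wmat F l.+1 k)) ord0 j)) j0).
have hj0 : size (q j0) = e := ht0.
have qj0 : q j0 != 0 by rewrite -size_poly_gt0 hj0.
rewrite mxE hentry addrC size_polyDl size_polyN size_mul // hj0 //.
Qed.

End Aux.

Theorem lemma10 (F : finFieldType) (n k l s : nat)
  (alpha w r : 'I_n -> F) (R : {poly F}) (B : 'M[{poly F}]_l.+1) :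
  (1 <= k)%N -> (k < n)%N -> (n < #|F|)%N ->
  injective alpha -> (forall i, alpha i != 0) -> (forall i, w i != 0) ->
  (0 < s)%N -> (s <= l)%N ->
  (size R <= n)%N -> (forall i, R.[alpha i] = r i / w i) ->
  ~ is_codeword k alpha w r ->
  is_basis_M s alpha (fun i => r i / w i) B ->
  weak_popov (B *m Wmat F l k) ->
  let G := \prod_(i < n) ('X - (alpha i)%:P) in
  Delta (CII s G R B *m Wmat F l.+1 k)
    = (l.+1)%:Z * ((size R)%:Z - 1 - k%:Z + 1)
  /\ (l.+1)%:Z * ((size R)%:Z - 1 - k%:Z + 1) <= (l.+1)%:Z * (n%:Z - k%:Z).
Proof.
move=> hk hkn hnq alinj al0 w0 hs0 hsl hRn hReval hncw [hB1 hB2 hB3] hwp G.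
have hRk : (k < size R)%N.
  rewrite ltnNge; apply/negP => hle; apply: hncw; exists R; split => // i.
  by rewrite hReval mulrC divfK.
have hpos i : (0 < vsize (row i (B *m Wmat F l k)))%N.
  have rB : row i B != 0.
    apply/eqP => h; have := hB3 (delta_mx 0 i); rewrite -rowE h => /(_ erefl).
    by move/matrixP => /(_ 0 i); rewrite !mxE !eqxx => /eqP; rewrite oner_eq0.
  have [t ht] : exists t, B i t != 0.
    case: (pickP (fun t => B i t != 0)) => [t ht|h]; first by exists t.
    exfalso; move/eqP: rB; apply; apply/matrixP => a b; rewrite !mxE.
    by move: (h b) => /negbFE/eqP.
  apply: leq_trans (bigop.leq_bigmax (F := fun j => size ((row i (B *m Wmat F l k)) ord0 j)) t).
  rewrite mxE BW_entry coef_pXY_ord mxE size_poly_gt0 mulf_neq0 //.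
  by rewrite expf_neq0 // polyX_eq0.
have hG : G ^+ s.+1 != 0.
  by apply: monic_neq0; apply: monic_exp; apply: monic_prod_XsubC.
have hmd : matdeg (CII s G R B *m Wmat F l.+1 k) =
    ((size (G ^+ s.+1)).-1 + (matdeg (B *m Wmat F l k) + l.+1 * (size R).-1))%N.
  rewrite /matdeg big_ord_recl /vdeg vsize_CW0; congr (_ + _)%N.
  rewrite (eq_bigr (fun i => (vsize (row i (B *m Wmat F l k))).-1 + (size R).-1)%N).
    by rewrite big_split /= sum_nat_const card_ord.
  move=> i _; rewrite vsize_CW //; have := hpos i.
  move: (vsize _) => x; rewrite -!subn1 => hx; move: hx hRk hk; move: (size R) => y; clear; lia.
have hdet : \det (CII s G R B *m Wmat F l.+1 k) =
    G ^+ s.+1 * \det (B *m Wmat F l k) * 'X^(l.+1 * k.-1).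
  by rewrite !det_mulmx det_CII det_W; ring.
have hBW := @wpopov_det _ _ _ hpos hwp.
have hD : \det (B *m Wmat F l k) != 0 by rewrite -size_poly_gt0 hBW.
have hsz : (size (\det (CII s G R B *m Wmat F l.+1 k))).-1 =
    ((size (G ^+ s.+1)).-1 + matdeg (B *m Wmat F l k) + l.+1 * k.-1)%N.
  rewrite hdet size_mul ?(mulf_neq0 hG hD) ?expf_neq0 ?polyX_eq0 // size_mul // size_polyXn hBW.
  have : (0 < size (G ^+ s.+1))%N by rewrite size_poly_gt0.
  move: (size (G ^+ s.+1)) => x hx.
  move: (matdeg (B *m Wmat F l k)) (l.+1 * k.-1)%N => M p; rewrite -!subn1; lia.
have key : matdeg (CII s G R B *m Wmat F l.+1 k) =
    ((size (\det (CII s G R B *m Wmat F l.+1 k))).-1 + l.+1 * (size R - k))%N.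
  rewrite hmd hsz.
  have -> : (size R).-1 = (k.-1 + (size R - k))%N.
    by move: hk hRk; move: (size R) => y; rewrite -!subn1; lia.
  rewrite mulnDr.
  move: ((size (G ^+ s.+1)).-1) (matdeg (B *m Wmat F l k)) (l.+1 * k.-1)%N (l.+1 * (size R - k))%N => a b c d.
  lia.
have e1 : (l.+1)%:Z * ((size R)%:Z - 1 - k%:Z + 1) = (l.+1 * (size R - k))%N%:Z.
  have e0 : (size R)%:Z - 1 - k%:Z + 1 = (size R - k)%N%:Z.
    by move: hRk; move: (size R) => y; lia.
  by rewrite e0 PoszM.
split.
  by rewrite /Delta key PoszD addrAC subrr add0r e1.
apply: ler_wpM2l => //.
by move: hRn; move: (size R) => y; lia.
Qed.
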